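(* Let $m,n$ be positive integers with $4\mid mn$. If there exists a Hadamard matrix of order $mn$, then there exists an $(mn-1)$--$\mathrm{MOFR}(2m,2n;2)$.
   Context: A Hadamard matrix of order $N$ is an $N\times N$ matrix $H$ with entries in $\{1,-1\}$ satisfying $HH^T=NI_N$. A frequency rectangle of type $\mathrm{FR}(m,n;q)$ is an $m\times n$ array on a symbol set of size $q$ in which each symbol appears exactly $n/q$ times in each row and $m/q$ times in each column. Two frequency rectangles of the same type are orthogonal if upon superimposition each ordered pair of symbols appears equally often. A $k$--$\mathrm{MOFR}(m,n;q)$ is a set of $k$ pairwise orthogonal frequency rectangles of type $\mathrm{FR}(m,n;q)$. *)

(* Defs.v *)
From mathcomp Require Import all_boot all_order all_algebra.
Set Implicit Arguments. Unset Strict Implicit. Unset Printing Implicit Defensive.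
Import GRing.Theory Num.Theory.

Definition is_hadamard (N : nat) (H : 'M[int]_N) : Prop :=
  (forall i j, H i j = 1%R \/ H i j = (-1)%R) /\
  (H *m H^T = (N%:R)%:M)%R.

Definition is_FR (m n q : nat) (F : 'M['I_q]_(m, n)) : Prop :=
  forall s : 'I_q,
    (forall i : 'I_m, #|[set j : 'I_n | F i j == s]| * q = n) /\
    (forall j : 'I_n, #|[set i : 'I_m | F i j == s]| * q = m).

Definition FR_orthogonal (m n q : nat) (F G : 'M['I_q]_(m, n)) : Prop :=
  forall a b : 'I_q,
    #|[set p : 'I_m * 'I_n | (F p.1 p.2 == a) && (G p.1 p.2 == b)]| * (q * q)
      = m * n.

Definition MOFR (k m n q : nat) : Prop :=
  exists F : 'I_k -> 'M['I_q]_(m, n),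
    (forall t, is_FR (F t)) /\
    (forall t u, t != u -> FR_orthogonal (F t) (F u)).

(* Main.v *)
Require Import Defs.
From mathcomp Require Import all_boot all_order all_algebra.
From mathcomp Require Import zify.
Set Implicit Arguments. Unset Strict Implicit. Unset Printing Implicit Defensive.
Import GRing.Theory Num.Theory.
Definition encT (T : finType) (N : nat) (E : #|T| = N) (x : T) : 'I_N :=
  cast_ord E (enum_rank x).
Definition decT (T : finType) (N : nat) (E : #|T| = N) (k : 'I_N) : T :=
  enum_val (cast_ord (esym E) k).
Lemma encTK (T : finType) N (E : #|T| = N) : cancel (encT E) (decT E).
Proof. by move=> x; rewrite /encT /decT cast_ordK enum_rankK. Qed.
Lemma decTK (T : finType) N (E : #|T| = N) : cancel (decT E) (encT E).
Proof. by move=> x; rewrite /encT /decT enum_valK cast_ordKV. Qed.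
Lemma cardBm m : #|{: bool * 'I_m}| = 2 * m.
Proof. by rewrite card_prod card_bool card_ord. Qed.
Lemma cardmn m n : #|{: 'I_m * 'I_n}| = m * n.
Proof. by rewrite card_prod !card_ord. Qed.

Definition code (x : bool) : 'I_2 := if x then ord_max else ord0.
Lemma code_eq x (a : 'I_2) : (code x == a) = (x == (val a == 1%N)).
Proof. by case: x; case: a => [[|[|k]]] Ha //. Qed.

Lemma card_bij (T U : finType) (f : T -> U) (g : U -> T) (P : pred U) :
  cancel f g -> cancel g f -> #|[set x | P (f x)]| = #|[set y | P y]|.
Proof.
move=> fK gK; rewrite -(card_imset _ (can_inj fK)); apply: eq_card => y.
rewrite inE; apply/imsetP/idP => [[x]|Py].
  by rewrite inE => Px ->.
by exists (g y); rewrite ?inE gK.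
Qed.

Lemma card_half (T : finType) (f : T -> T) (P : pred T) :
  involutive f -> (forall x, P (f x) = ~~ P x) -> #|[set x | P x]| * 2 = #|T|.
Proof.
move=> fK Pf.
have E : #|[set x | P x]| = #|[set x | ~~ P x]|.
  by rewrite -(card_bij (fun x => P x) fK fK); apply: eq_card=> x; rewrite !inE Pf.
rewrite -(cardsC [set x | P x]) muln2 -addnn; congr (_ + _); rewrite E.
by apply: eq_card => x; rewrite !inE.
Qed.
Lemma agree_half N (H : 'M[int]_N) r r' : is_hadamard H -> r != r' ->
  #|[set k | (H r k == 1%R) == (H r' k == 1%R)]| * 2 = N.
Proof.
move=> [pm HH] rr.
set P := fun k => (H r k == 1%R) == (H r' k == 1%R).
have S : (\sum_k (if P k then 1 else -1) = 0 :> int)%R.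
  have := congr1 (fun A : 'M[int]_N => A r r') HH; rewrite !mxE (negbTE rr) mulr0n => E; apply: etrans E; apply: esym.
  apply: eq_bigr => k _; rewrite mxE /P.
  by case: (pm r k) => ->; case: (pm r' k) => ->.
rewrite (bigID P) /= in S.
rewrite (eq_bigr (fun _ => 1%R)) in S; last by move=> k ->.
rewrite [X in (_ + X)%R](eq_bigr (fun _ => (-1)%R)) in S; last by move=> k /negbTE ->.
rewrite !sumr_const in S.
rewrite (@eq_card _ _ [set k | P k]) in S; last by move=> k; rewrite inE.
rewrite [in X in (_ + X)%R](@eq_card _ _ [set k | ~~ P k]) in S; last by move=> k; rewrite inE.
have C := cardsC [set k | P k]; rewrite card_ord in C.
have E2 : ~: [set k | P k] = [set k | ~~ P k] by apply/setP => k; rewrite !inE.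
rewrite E2 in C.
move: S C.
set A := #|[set k | P k]|; set D := #|[set k | ~~ P k]|.
move=> S.
have AD : A = D.
  by move/eqP: S; rewrite mulNrn subr_eq0 eqr_nat => /eqP.
by move=> <-; rewrite AD muln2 addnn -AD.
Qed.

Definition hbit m n (H : 'M[int]_(m * n)) (r : 'I_(m * n))
  (i : 'I_(2 * m)) (j : 'I_(2 * n)) : bool :=
  let x := decT (cardBm m) i in let y := decT (cardBm n) j in
  (H r (encT (cardmn m n) (x.2, y.2)) == 1%R) (+) x.1 (+) y.1.

Definition flipm m (i : 'I_(2 * m)) : 'I_(2 * m) :=
  encT (cardBm m) (~~ (decT (cardBm m) i).1, (decT (cardBm m) i).2).

Lemma flip_dec m (i : 'I_(2 * m)) :
  decT (cardBm m) (flipm i) = (~~ (decT (cardBm m) i).1, (decT (cardBm m) i).2).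
Proof. by rewrite /flipm encTK. Qed.

Lemma flipK m : involutive (@flipm m).
Proof.
move=> i; rewrite {1}/flipm flip_dec /= negbK -surjective_pairing.
exact: decTK.
Qed.

Lemma hbit_flipl m n H r i j : @hbit m n H r (flipm i) j = ~~ hbit H r i j.
Proof. by rewrite /hbit flip_dec /= addbN addNb. Qed.

Lemma hbit_flipr m n H r i j : @hbit m n H r i (flipm j) = ~~ hbit H r i j.
Proof. by rewrite /hbit flip_dec /= addbN. Qed.

Definition rowi N (t : 'I_(N - 1)) : 'I_N := widen_ord (leq_subr 1 N) t.

Definition Fm m n (H : 'M[int]_(m * n)) (t : 'I_(m * n - 1)) :
  'M['I_2]_(2 * m, 2 * n) :=
  \matrix_(i, j) code (hbit H (rowi t) i j).

Lemma Fm_FR m n H t : is_FR (@Fm m n H t).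
Proof.
move=> s; split => [i|j].
  have -> : #|[set j | Fm H t i j == s]| =
            #|[set j | hbit H (rowi t) i j == (val s == 1%N)]|.
    by apply: eq_card => j; rewrite !inE mxE code_eq.
  rewrite (@card_half _ (@flipm n)) ?card_ord //; first exact: flipK.
  by move=> j; rewrite hbit_flipr; case: (hbit H (rowi t) i j); case: (val s == 1%N).
have -> : #|[set i | Fm H t i j == s]| =
          #|[set i | hbit H (rowi t) i j == (val s == 1%N)]|.
  by apply: eq_card => i; rewrite !inE mxE code_eq.
rewrite (@card_half _ (@flipm m)) ?card_ord //; first exact: flipK.
by move=> i; rewrite hbit_flipl; case: (hbit H (rowi t) i j); case: (val s == 1%N).
Qed.

Lemma Fm_orth m n H t u : is_hadamard H -> t != u ->
  FR_orthogonal (@Fm m n H t) (Fm H u).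
Proof.
move=> Hh tu a b.
set rt := rowi t; set ru := rowi u.
have rtu : rt != ru.
  by apply: contra tu => /eqP/(congr1 val) /= E; apply/eqP/val_inj.
set al := (val a == 1%N); set be := (val b == 1%N).
set bt := fun p : 'I_(2 * m) * 'I_(2 * n) => hbit H rt p.1 p.2.
set bu := fun p : 'I_(2 * m) * 'I_(2 * n) => hbit H ru p.1 p.2.
have -> : #|[set p | (Fm H t p.1 p.2 == a) && (Fm H u p.1 p.2 == b)]| =
          #|[set p | (bt p == al) && (bu p == be)]|.
  by apply: eq_card => p; rewrite !inE !mxE !code_eq.
pose g := fun p : 'I_(2 * m) * 'I_(2 * n) => (flipm p.1, p.2).
have gK : involutive g by move=> [i j]; rewrite /g /= flipK.
have XY : #|[set p | (bt p == al) && (bu p == be)]| = #|[set p | (bt p == ~~ al) && (bu p == ~~ be)]|.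
  rewrite -(card_bij (fun p => (bt p == ~~ al) && (bu p == ~~ be)) gK gK).
  apply: eq_card => p; rewrite !inE /bt /bu /g /= !hbit_flipl.
  by case: (hbit H rt _ _); case: (hbit H ru _ _); case: (al); case: (be).
set c := (al == be).
have XZ : #|[set p | (bt p == al) && (bu p == be)]| + #|[set p | (bt p == al) && (bu p == be)]| = #|[set p | (bt p == bu p) == c]|.
  rewrite {2}XY -cardsUI.
  have -> : [set p | (bt p == al) && (bu p == be)] :&:
            [set p | (bt p == ~~ al) && (bu p == ~~ be)] = set0.
    apply/setP => p; rewrite !inE.
    by case: (bt p); case: (bu p); case: (al); case: (be).
  rewrite cards0 addn0; apply: eq_card => p; rewrite !inE /c.
  by case: (bt p); case: (bu p); case: (al); case: (be).
pose kap := fun p : 'I_(2 * m) * 'I_(2 * n) =>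
  encT (cardmn m n) ((decT (cardBm m) p.1).2, (decT (cardBm n) p.2).2).
pose Q := fun k => ((H rt k == 1%R) == (H ru k == 1%R)) == c.
have ZQ : #|[set p | (bt p == bu p) == c]| = #|[set p | Q (kap p)]|.
  apply: eq_card => p; rewrite !inE /Q /kap /bt /bu /hbit /=.
  by case: (H rt _ == 1%R); case: (H ru _ == 1%R); case: (_.1); case: (_.1).
pose psi := fun q : (bool * bool) * ('I_m * 'I_n) =>
  (encT (cardBm m) (q.1.1, q.2.1), encT (cardBm n) (q.1.2, q.2.2)).
pose psi' := fun p : 'I_(2 * m) * 'I_(2 * n) =>
  (((decT (cardBm m) p.1).1, (decT (cardBm n) p.2).1),
   ((decT (cardBm m) p.1).2, (decT (cardBm n) p.2).2)).
have psiK : cancel psi psi'.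
  by move=> [[e f] [x y]]; rewrite /psi /psi' /= !encTK.
have psiK' : cancel psi' psi.
  move=> [i j]; rewrite /psi /psi' /= -!surjective_pairing !decTK //.
have ZW : #|[set p | Q (kap p)]| = 4 * #|[set k | Q k]|.
  rewrite -(card_bij (fun p => Q (kap p)) psiK psiK').
  have -> : #|[set q | Q (kap (psi q))]| =
            #|setX [set: bool * bool] [set y | Q (encT (cardmn m n) y)]|.
    apply: eq_card => q; rewrite !inE /kap /psi /= !encTK /=.
    by rewrite -surjective_pairing.
  rewrite cardsX cardsT card_prod card_bool.
  by rewrite (card_bij Q (@encTK _ _ (cardmn m n)) (@decTK _ _ (cardmn m n))).
have W2 : #|[set k | Q k]| * 2 = m * n.
  have A2 := agree_half Hh rtu.
  rewrite /Q; case: (c).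
    by apply: etrans A2; congr (_ * 2); apply: eq_card => k; rewrite !inE eqb_id.
  have C := cardsC [set k | (H rt k == 1%R) == (H ru k == 1%R)].
  rewrite card_ord in C.
  have -> : #|[set k | ((H rt k == 1%R) == (H ru k == 1%R)) == false]| =
            #|~: [set k | (H rt k == 1%R) == (H ru k == 1%R)]|.
    by apply: eq_card => k; rewrite !inE eqbF_neg.
  lia.
rewrite ZQ ZW in XZ.
lia.
Qed.

Theorem mainTheorem2 (m n : nat) :
  0 < m -> 0 < n -> 4 %| m * n ->
  (exists H : 'M[int]_(m * n), is_hadamard H) ->
  MOFR (m * n - 1) (2 * m) (2 * n) 2.
Proof.
move=> _ _ _ [H Hh].
exists (Fm H); split; first exact: Fm_FR.
by move=> t u tu; apply: Fm_orth.
Qed.
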